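(* Let $n\ge 1$. For any code $C_n\in\mathbb{S}_n$ with codeword lengths $l_1,\dots,l_n$, there exist an integer $m\le\sum_{i=1}^n(l_i-1)$ (in particular $m=O(n^2)$) and symmetric fix-free codes $S_n^{(1)},\dots,S_n^{(m)}\in\mathbb{S}_n$ such that $R_n=S_n^{(0)}\rightarrow S_n^{(1)}\rightarrow\cdots\rightarrow S_n^{(m)}=C_n$, and such that for each $i\in\{0,1,\dots,m-1\}$ every codeword of $C_n$ has a prefix in $S_n^{(i)}$. Furthermore, there exist codes $B_n\in\mathbb{S}_n$ for which any such sequence from $R_n$ to $B_n$ requires $m=\Omega(n^{1.5})$ codes.
   Context: All strings are finite binary strings; $|w|$ denotes length. A palindrome is a string equal to its reversal. A symmetric fix-free code is a finite set of binary palindromes no one of which is a proper prefix of another. $\mathbb{S}_n$ is the set of symmetric fix-free codes with exactly $n$ codewords which do not contain the string $1$ and all of whose codewords have length at most $n$. $R_n=\{s_1,\dots,s_n\}$ with $s_1=0$ and $s_i=1\,0^{i-2}\,1$ for $2\le i\le n$ (so $|s_i|=i$). For a palindrome $\sigma$, $\mathcal{N}(\sigma)$ is the set of palindromes $w$ such that $\sigma$ is the longest palindrome that is a proper prefix of $w$, and $\mathcal{N}_n(\sigma)=\{w\in\mathcal{N}(\sigma):|w|\le n\}$. For $S,\hat S\in\mathbb{S}_n$, write $S\rightarrow\hat S$ if there is $\sigma\in S$ with $\hat S\subseteq (S\cup\mathcal{N}_n(\sigma))\setminus\{\sigma\}$. ''Prefix'' includes equality. *)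

(* Defs.v *)
From HB Require Import structures.
From mathcomp Require Import all_boot finmap.
Set Implicit Arguments. Unset Strict Implicit. Unset Printing Implicit Defensive.
Local Open Scope fset_scope.

(* Binary strings: bitseq = seq bool, with 0 = false and 1 = true. *)

Definition palindrome (w : bitseq) : bool := rev w == w.

Definition pprefix (u w : bitseq) : bool := prefix u w && (u != w).

Definition sym_fixfree (S : {fset bitseq}) : Prop :=
  (forall w, w \in S -> palindrome w /\ w != [::]) /\
  (forall u v, u \in S -> v \in S -> ~~ pprefix u v).

Definition inSS (n : nat) (S : {fset bitseq}) : Prop :=
  [/\ sym_fixfree S, #|` S| = n, [:: true] \notin S &
      forall w, w \in S -> size w <= n].

Definition s_word (i : nat) : bitseq :=
  if i == 1 then [:: false] else true :: rcons (nseq (i - 2) false) true.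

Definition R_code (n : nat) : {fset bitseq} := [fset s_word i | i in iota 1 n].

Definition inN (sigma w : bitseq) : Prop :=
  [/\ palindrome w, palindrome sigma, pprefix sigma w &
      forall u, palindrome u -> pprefix u w -> size u <= size sigma].

Definition inNn (n : nat) (sigma w : bitseq) : Prop := inN sigma w /\ size w <= n.

Definition step (n : nat) (S S' : {fset bitseq}) : Prop :=
  exists2 sigma, sigma \in S &
    forall w, w \in S' -> (w \in S \/ inNn n sigma w) /\ w != sigma.

Definition good_seq (n : nat) (C : {fset bitseq}) (m : nat)
    (S : nat -> {fset bitseq}) : Prop :=
  [/\ S 0 = R_code n, S m = C,
      (forall i, 1 <= i <= m -> inSS n (S i)),
      (forall i, i < m -> step n (S i) (S i.+1)) &
      (forall i, i < m -> forall c, c \in C -> exists2 p, p \in S i & prefix p c)].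

Definition sum_len_minus1 (C : {fset bitseq}) : nat :=
  \sum_(w <- enum_fset C) (size w - 1).

(* Main.v *)
Require Import Defs.
From HB Require Import structures.
From mathcomp Require Import all_boot finmap zify.
From Stdlib Require PeanoNat.
Set Implicit Arguments. Unset Strict Implicit. Unset Printing Implicit Defensive.

Local Open Scope fset_scope.

Lemma pprefix_size (u w : bitseq) : pprefix u w -> size u < size w.
Proof.
rewrite /pprefix => /andP[p ne].
have := size_prefix p; rewrite leq_eqVlt => /orP[/eqP e|//].
move: p; rewrite prefixE e take_size => /eqP E; by rewrite E eqxx in ne.
Qed.

Lemma prefix_same_size (u w : bitseq) : prefix u w -> size u = size w -> u = w.
Proof. by rewrite prefixE => /eqP H e; rewrite -H e take_size. Qed.

Lemma prefix_comp (a b c : bitseq) : prefix a c -> prefix b c -> size a <= size b -> prefix a b.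
Proof.
rewrite !prefixE => /eqP Ha /eqP Hb le.
by rewrite -Hb take_takel // Ha.
Qed.

Lemma prefix_pprefix (a b : bitseq) : prefix a b -> size a < size b -> pprefix a b.
Proof.
move=> p lt; rewrite /pprefix p /=; apply/eqP => E; by rewrite E ltnn in lt.
Qed.

Local Open Scope fset_scope.

Lemma R_memP n w : reflect (exists2 i, i \in iota 1 n & w = s_word i) (w \in R_code n).
Proof. exact: imfsetP. Qed.

Lemma s_word_size i : 1 <= i -> size (s_word i) = i.
Proof.
rewrite /s_word; case: eqP => [->//|ne lt] /=.
rewrite size_rcons size_nseq; lia.
Qed.

Lemma card_R n : #|` R_code n| = n.
Proof.
rewrite /R_code card_in_imfset.
  rewrite -{2}(size_iota 1 n); apply: perm_size; apply: uniq_perm.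
  - exact: enum_finmem_uniq.
  - exact: iota_uniq.
  - exact: enum_finmemE.
move=> x y; rewrite !mem_iota => /andP[x1 _] /andP[y1 _] E.
by rewrite -(s_word_size x1) -(s_word_size y1) E.
Qed.

Lemma rev_nseq' (k : nat) (b : bool) : rev (nseq k b) = nseq k b.
Proof. elim: k => //= k IH; rewrite rev_cons IH -cats1. by elim: k {IH} => //= k ->. Qed.

Lemma s_word_pal i : palindrome (s_word i).
Proof.
rewrite /palindrome /s_word; case: (i == 1) => //.
by rewrite rev_cons rev_rcons rev_nseq'.
Qed.

Lemma prefix_nth (a b : bitseq) k : prefix a b -> k < size a -> nth false a k = nth false b k.
Proof. by move=> /prefixP[r ->] lt; rewrite nth_cat lt. Qed.

Lemma R_antichain n u v : u \in R_code n -> v \in R_code n -> ~~ pprefix u v.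
Proof.
move=> /R_memP[i /[!mem_iota] /andP[i1 _] ->] /R_memP[j /[!mem_iota] /andP[j1 _] ->].
apply/negP=> pp; have := pprefix_size pp; rewrite !s_word_size // => lt.
move: pp => /andP[p _].
have := prefix_nth (k := i.-1) p; rewrite s_word_size // => /(_ ltac:(lia)).
rewrite /s_word; case: eqP => [i1'|ine]; case: eqP => [j1'|jne]; try lia.
  by subst i; case: (j-2) => //.
have -> : i.-1 = (i-2).+1 by lia.
rewrite /= !nth_rcons !size_nseq ltnn eqxx.
have -> : i - 2 < j - 2 by lia.
by rewrite nth_nseq; case: ifP.
Qed.

Lemma bools_split (q : bitseq) : q = nseq (size q) false \/ exists j r, q = nseq j false ++ true :: r.
Proof.
elim: q => [|b q IH]; first by left.
case: b; first by right; exists 0, q.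
case: IH => [E|[j [r E]]]; first by left; rewrite /= -E.
by right; exists j.+1, r; rewrite /= E.
Qed.

Lemma R_cover n p : palindrome p -> p != [::] -> p != [:: true] -> size p <= n ->
  exists2 r, r \in R_code n & prefix r p.
Proof.
case: p => [//|b q] pal _ nt sz.
case: b pal nt sz => pal nt sz; last first.
  exists [:: false]; last by rewrite prefix_cons prefix0s.
  apply/(@R_memP n); exists 1 => //; rewrite mem_iota; simpl in sz; lia.
case: (bools_split q) => [E|[j [r E]]].
  move: pal nt; rewrite E; case: (size q) => [|l]; first by move=> _; rewrite eqxx.
  by rewrite /palindrome rev_cons rev_nseq'.
exists (s_word j.+2).
  apply/R_memP; exists j.+2 => //; rewrite mem_iota; move: sz; rewrite E /= size_cat /= size_nseq; lia.
rewrite /s_word /= -cats1 E subn2 /=.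
change (prefix (nseq j false ++ [:: true]) (nseq j false ++ true :: r)).
by rewrite prefix_catr // eqxx /= prefix0s.
Qed.

Lemma inSS_R n : inSS n (R_code n).
Proof.
split.
- split.
  + move=> w /R_memP[i /[!mem_iota] /andP[i1 _] ->]; split; first exact: s_word_pal.
    apply/eqP=> E; have := s_word_size i1; rewrite E /=; lia.
  + exact: R_antichain.
- exact: card_R.
- apply/negP=> /R_memP[i /[!mem_iota] /andP[i1 _] E].
  have := s_word_size i1; rewrite -E /= => i1'; subst i; by [].
- move=> w /R_memP[i /[!mem_iota] /andP[i1 i2] ->]; rewrite s_word_size //; lia.
Qed.

Local Open Scope fset_scope.

Definition cov (S : {fset bitseq}) (p : bitseq) : bool := has (fun s => prefix s p) (enum_fset S).

Lemma covP S p : reflect (exists2 s, s \in S & prefix s p) (cov S p).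
Proof. exact: hasP. Qed.

Definition antichain (S : {fset bitseq}) := forall u v, u \in S -> v \in S -> ~~ pprefix u v.

Lemma count_in_sub (T : eqType) (a b : pred T) (s : seq T) :
  (forall x, x \in s -> a x -> b x) -> count a s <= count b s.
Proof.
elim: s => //= x s IH H.
apply: leq_add; last by apply: IH => y ys; apply: H; rewrite in_cons ys orbT.
case ax: (a x) => //=; by rewrite (H x) // in_cons eqxx.
Qed.

Lemma good_antichain n B m S i : good_seq n B m S -> i <= m -> antichain (S i).
Proof.
case=> [S0 Sm inS _ _] le; case: i le => [|i] le.
  by rewrite S0; exact: R_antichain.
by have [[_ ac] _ _ _] := inS i.+1 ltac:(lia).
Qed.

Lemma lower_step n B m S (U : seq bitseq) i :
  inSS n B -> good_seq n B m S -> uniq U ->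
  (forall p, p \in U -> exists2 c, c \in B & pprefix p c) ->
  (forall p, p \in U -> palindrome p) ->
  i < m -> count (cov (S i)) U <= count (cov (S i.+1)) U + 1.
Proof.
move=> inB gs uU Uc Up lt.
have gs' := gs; case: gs' => [S0 Sm inS stp pre].
have [sig sigS Hst] := stp i lt.
have acI := good_antichain gs (ltnW lt).
have key : forall p, p \in U -> cov (S i) p -> cov (S i.+1) p || (p == sig).
  move=> p pU /covP[s sS sp]; case: (eqVneq p sig) => [_|pne]; first by rewrite orbT.
  rewrite orbF; have [c cB pc] := Uc p pU.
  have [s' s'S s'c] : exists2 s', s' \in S i.+1 & prefix s' c.
    case: (ltnP i.+1 m) => [lt'|ge]; first exact: pre.
    have -> : i.+1 = m by apply/eqP; rewrite eqn_leq lt ge. by exists c; rewrite ?Sm ?prefix_refl.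
  have pc' : prefix p c by case/andP: pc.
  case: (leqP (size s') (size p)) => [le|gt].
    by apply/covP; exists s' => //; apply: prefix_comp s'c pc' le.
  have ps' : prefix p s' by apply: prefix_comp pc' s'c (ltnW gt).
  have [[Hin|[[_ psig ppsig mx] _]] _] := Hst s' s'S.
    have := acI s s' sS Hin; rewrite prefix_pprefix //; first exact: prefix_trans sp ps'.
    exact: leq_ltn_trans (size_prefix sp) gt.
  have lep := mx p (Up p pU) (prefix_pprefix ps' gt).
  have psg : prefix p sig by apply: prefix_comp ps' (proj1 (andP ppsig)) lep.
  have ltp : size p < size sig.
    rewrite ltn_neqAle lep andbT; apply/eqP => E; by rewrite (prefix_same_size psg E) eqxx in pne.
  have := acI s sig sS sigS; rewrite prefix_pprefix //; first exact: prefix_trans sp psg.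
  exact: leq_ltn_trans (size_prefix sp) ltp.
apply: leq_trans (count_in_sub (b := predU (cov (S i.+1)) (pred1 sig)) key) _.
apply: (@leq_trans (count (cov (S i.+1)) U + count (pred1 sig) U)).
  by rewrite -count_predUI leq_addr.
by rewrite leq_add2l count_uniq_mem // leq_b1.
Qed.

Lemma lower_general n B m S (U : seq bitseq) :
  inSS n B -> good_seq n B m S -> uniq U ->
  (forall p, p \in U -> exists2 c, c \in B & pprefix p c) ->
  (forall p, p \in U -> [/\ palindrome p, p != [::] & p != [:: true]]) ->
  size U <= m.
Proof.
move=> inB gs uU Uc Up.
have gs' := gs; case: gs' => [S0 Sm inS stp pre].
have [[Bpal Bac] _ _ Bsz] := inB.
have f0 : count (cov (S 0)) U = size U.
  apply/eqP; rewrite -all_count; apply/allP => p pU.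
  have [pp pn pt] := Up p pU; have [c cB pc] := Uc p pU.
  have szp : size p <= n by apply: leq_trans (ltnW (pprefix_size pc)) (Bsz c cB).
  have [r rR rp] := R_cover pp pn pt szp; apply/covP; exists r => //; by rewrite S0.
have fm : count (cov (S m)) U = 0.
  apply/eqP; rewrite -leqn0 leqNgt -has_count; apply/hasP => [[p pU /covP[b bS bp]]].
  have [c cB pc] := Uc p pU; rewrite Sm in bS.
  have := Bac b c bS cB; rewrite prefix_pprefix //.
    exact: prefix_trans bp (proj1 (andP pc)).
  exact: leq_ltn_trans (size_prefix bp) (pprefix_size pc).
have H : forall i, i <= m -> size U <= count (cov (S i)) U + i.
  elim=> [|i IH] le; first by rewrite f0 addn0.
  apply: leq_trans (IH (ltnW le)) _.
  have := lower_step inB gs uU Uc (fun p pU => let: And3 a _ _ := Up p pU in a) le.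
  lia.
by have := H m (leqnn m); rewrite fm.
Qed.

Local Close Scope fset_scope.


Fixpoint W (k j T : nat) : bitseq :=
  if T is T'.+1 then nseq k true ++ nseq j false ++ W k j T' else nseq k true.

Lemma W_size k j T : size (W k j T) = k + T * (j + k).
Proof. elim: T => [|T IH] /=; rewrite ?size_cat ?size_nseq ?IH; lia. Qed.

Lemma W_commute k j T : W k j T ++ (nseq j false ++ nseq k true) = nseq k true ++ nseq j false ++ W k j T.
Proof. elim: T => [|T IH] //=; by rewrite -!catA IH. Qed.

Lemma W_pal k j T : palindrome (W k j T).
Proof.
rewrite /palindrome; apply/eqP; elim: T => [|T IH] /=; first exact: rev_nseq'.
by rewrite !rev_cat !rev_nseq' IH -catA W_commute.
Qed.

Lemma W_prefix k j s t : s <= t -> prefix (W k j s) (W k j t).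
Proof.
elim: t => [|t IH]; first by rewrite leqn0 => /eqP ->; exact: prefix_refl.
rewrite leq_eqVlt => /orP[/eqP ->|lt]; first exact: prefix_refl.
apply: prefix_trans (IH lt) _; rewrite /= -W_commute; exact: prefix_prefix.
Qed.

Lemma W_shape k j T : 0 < k -> exists r, W k j T.+1 = nseq k true ++ nseq j false ++ true :: r.
Proof.
case: k => // k _ /=; case: T => [|T] /=; by eexists.
Qed.

Lemma nth_shape1 k j r i : i < k -> nth false (nseq k true ++ nseq j false ++ true :: r) i = true.
Proof. by move=> lt; rewrite nth_cat size_nseq lt nth_nseq lt. Qed.

Lemma nth_shape2 k j r i : k <= i < k + j -> nth false (nseq k true ++ nseq j false ++ true :: r) i = false.
Proof.
move=> /andP[le lt]; rewrite nth_cat size_nseq ltnNge le /= nth_cat size_nseq.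
have -> : i - k < j by lia.
by rewrite nth_nseq; case: ifP.
Qed.

Lemma nth_shape3 k j r : nth false (nseq k true ++ nseq j false ++ true :: r) (k + j) = true.
Proof.
rewrite nth_cat size_nseq ltnNge leq_addr /= nth_cat size_nseq.
have -> : k + j - k = j by lia.
by rewrite ltnn subnn.
Qed.

Lemma size_shape k j (r : bitseq) : size (nseq k true ++ nseq j false ++ true :: r) = k + j + (size r).+1.
Proof. rewrite !size_cat !size_nseq /=; lia. Qed.

Lemma shape_prefix k j k' j' (r r' : bitseq) : 0 < j -> 0 < j' ->
  prefix (nseq k true ++ nseq j false ++ true :: r) (nseq k' true ++ nseq j' false ++ true :: r') ->
  k = k' /\ j = j'.
Proof.
move=> j0 j0' p.
have N := fun i (h : i < k + j + (size r).+1) => prefix_nth (k := i) p ltac:(by rewrite size_shape).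
have kk : k = k'.
  case: (ltngtP k k') => // c.
    have := N k ltac:(lia); rewrite nth_shape2 ?nth_shape1 //; lia.
  have := N k' ltac:(lia); rewrite nth_shape1 // nth_shape2 //; lia.
subst k'; split => //.
case: (ltngtP j j') => // c.
  have := N (k + j) ltac:(lia); rewrite nth_shape3 nth_shape2 //; lia.
have := N (k + j') ltac:(lia); rewrite nth_shape3 nth_shape2 //; lia.
Qed.

Local Close Scope fset_scope.

Lemma W_inj_prefix k j k' j' s s' : 0 < k -> 0 < k' -> 0 < j -> 0 < j' -> 0 < s -> 0 < s' ->
  prefix (W k j s) (W k' j' s') -> k = k' /\ j = j'.
Proof.
case: s => // s; case: s' => // s' k0 k0' j0 j0' _ _.
have [r ->] := W_shape j s k0; have [r' ->] := W_shape j' s' k0'.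
exact: shape_prefix.
Qed.

Definition dd n := Nat.sqrt n.
Definition TT n := dd n %/ 4.
Definition kk n i := (i %% dd n).+1.
Definition jj n i := (i %/ dd n).+1.
Definition cw n i := W (kk n i) (jj n i) (TT n).
Definition node n i s := W (kk n i) (jj n i) s.
Definition Bset n : {fset bitseq} := [fset cw n i | i in iota 0 n]%fset.
Definition Useq n := [seq node n i s | i <- iota 0 n, s <- iota 1 (TT n).-1].

Lemma dd_spec n : dd n * dd n <= n < (dd n).+1 * (dd n).+1.
Proof. have := PeanoNat.Nat.sqrt_spec' n; rewrite /dd; lia. Qed.

Lemma dd_big n : 256 <= n -> 16 <= dd n.
Proof. move=> h; have := dd_spec n; nia. Qed.

Lemma idx_inj n i i' : 0 < dd n -> kk n i = kk n i' -> jj n i = jj n i' -> i = i'.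
Proof.
rewrite /kk /jj => d0 [e1] [e2].
by rewrite (divn_eq i (dd n)) (divn_eq i' (dd n)) e1 e2.
Qed.

Lemma size_bound n i : 256 <= n -> i < n -> kk n i + TT n * (jj n i + kk n i) <= n.
Proof.
move=> big lt; have d16 := dd_big big; have [sp1 sp2] := andP (dd_spec n).
rewrite /kk /jj /TT; move: d16 sp1 sp2; generalize (dd n) => d d16 sp1 sp2.
have hk : (i %% d).+1 <= d by rewrite ltn_pmod //; lia.
have hq : i %/ d * d <= i := leq_trunc_div i d.
have hj : (i %/ d).+1 <= d + 3.
  suff : i %/ d <= d + 2 by lia.
  move: hq; generalize (i %/ d) => q hq.
  case: (leqP q (d + 2)) => // h; have := leq_mul h (leqnn d); nia.
have hT : d %/ 4 * 4 <= d by rewrite leq_trunc_div.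
move: hk hj hT; generalize (i %% d).+1 (i %/ d).+1 (d %/ 4) => a b c ha hb hc; nia.
Qed.

Lemma final_arith n m : 256 <= n -> n * (TT n).-1 <= m -> n ^ 3 <= 64 * m ^ 2.
Proof.
move=> big hm; have d16 := dd_big big; have [sp1 sp2] := andP (dd_spec n).
move: hm; rewrite /TT; move: d16 sp1 sp2; generalize (dd n) => d d16 sp1 sp2.
have e := divn_eq d 4; have r4 : d %% 4 < 4 by rewrite ltn_pmod.
move: e r4; generalize (d %/ 4) (d %% 4) => T r e r4 hm.
have u2 : 3 <= T.-1 by lia.
have h1 : d.+1 <= 8 * T.-1 by lia.
have h2 : n <= 64 * (T.-1 * T.-1).
  have := leq_mul h1 h1; lia.
have h3 : n * n * n <= n * n * (64 * (T.-1 * T.-1)) by rewrite leq_mul2l h2 orbT.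
have h4 : (n * T.-1) * (n * T.-1) <= m * m := leq_mul hm hm.
rewrite !expnS expn0 !muln1. nia.
Qed.

Local Close Scope fset_scope.

Lemma dd_pos n : 256 <= n -> 0 < dd n.
Proof. move=> h; have := dd_big h; lia. Qed.

Lemma TT_big n : 256 <= n -> 4 <= TT n.
Proof.
move=> h; have := dd_big h; rewrite /TT => d16.
have e := divn_eq (dd n) 4; have r4 : dd n %% 4 < 4 by rewrite ltn_pmod.
move: e r4 d16; generalize (dd n %/ 4) (dd n %% 4) (dd n) => a b c; lia.
Qed.

Lemma node_inj n i i' s s' : 256 <= n -> 0 < s -> 0 < s' ->
  prefix (node n i s) (node n i' s') -> i = i'.
Proof.
move=> h s0 s0' p; have [e1 e2] := W_inj_prefix (ltn0Sn _) (ltn0Sn _) (ltn0Sn _) (ltn0Sn _) s0 s0' p.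
exact: idx_inj (dd_pos h) e1 e2.
Qed.

Lemma W_nt k j s : 0 < k -> 0 < s -> W k j s != [:: true].
Proof.
move=> k0 s0; apply/eqP => E; have := W_size k j s; rewrite E /=.
have := leq_mul s0 (leq_addl j k); rewrite mul1n; lia.
Qed.

Lemma W_ne k j s : 0 < k -> W k j s != [::].
Proof. move=> k0; apply/eqP => E; have := W_size k j s; rewrite E /=; lia. Qed.

Lemma inSS_B n : 256 <= n -> inSS n (Bset n).
Proof.
move=> h; have T4 := TT_big h.
have mem : forall w, w \in Bset n -> exists2 i, i \in iota 0 n & w = cw n i.
  move=> w; exact/imfsetP.
split.
- split.
  + move=> w /mem[i _ ->]; split; first exact: W_pal.
    exact: W_ne.
  + move=> u v /mem[i _ ->] /mem[i' _ ->]; apply/negP => /andP[p ne].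
    have e := node_inj h (ltnW (ltnW (ltnW T4))) (ltnW (ltnW (ltnW T4))) p.
    by subst i'; rewrite eqxx in ne.
- rewrite /Bset card_in_imfset.
    rewrite -{2}(size_iota 0 n); apply: perm_size; apply: uniq_perm.
    + exact: enum_finmem_uniq.
    + exact: iota_uniq.
    + exact: enum_finmemE.
  move=> x y _ _ E; apply: (node_inj (s := TT n) (s' := TT n) h); try lia.
  rewrite /node -/(cw n x) E; exact: prefix_refl.
- apply/negP => /mem[i _ E]; have := @W_nt (kk n i) (jj n i) (TT n) (ltn0Sn (i %% dd n)) (ltnW (ltnW (ltnW T4))).
  by rewrite -/(cw n i) -E eqxx.
- move=> w /mem[i]; rewrite mem_iota add0n => /andP[_ lt] ->.
  by rewrite /cw W_size; apply: size_bound.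
Qed.

Lemma U_props n : 256 <= n ->
  [/\ uniq (Useq n),
      size (Useq n) = n * (TT n).-1,
      (forall p, p \in Useq n -> exists2 c, c \in Bset n & pprefix p c) &
      (forall p, p \in Useq n -> [/\ palindrome p, p != [::] & p != [:: true]])].
Proof.
move=> h; have T4 := TT_big h.
split.
- apply: allpairs_uniq; [exact: iota_uniq | exact: iota_uniq|].
  move=> [i s] [i' s'] /allpairsP[[a b] [/= ai bs [-> ->]]] /allpairsP[[a' b'] [/= ai' bs' [-> ->]]] /= E.
  move: bs bs'; rewrite !mem_iota => /andP[b1 _] /andP[b1' _].
  have ei : a = a' by apply: (node_inj h b1 b1'); rewrite E; exact: prefix_refl.
  subst a'; congr pair.
  have := congr1 size E; rewrite /node !W_size => E2.
  move/eqP: E2; rewrite eqn_add2l eqn_pmul2r ?addn_gt0 ?orbT //; exact/eqP.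
- by rewrite size_allpairs !size_iota.
- move=> p /allpairsP[[i s] [/= ii si ->]].
  exists (cw n i); first by apply/imfsetP; exists i.
  move: si; rewrite mem_iota => /andP[s1 s2].
  apply: prefix_pprefix; first by apply: W_prefix; lia.
  rewrite /cw /node !W_size ltn_add2l ltn_pmul2r //; lia.
- move=> p /allpairsP[[i s] [/= ii si ->]].
  move: si; rewrite mem_iota => /andP[s1 s2].
  split; [exact: W_pal | exact: W_ne | exact: W_nt].
Qed.

Lemma part2 : exists c N0 : nat, 0 < c /\
     forall n, N0 <= n ->
       exists B : {fset bitseq}, inSS n B /\
         forall m (S : nat -> {fset bitseq}), good_seq n B m S ->
           n ^ 3 <= c * m ^ 2.
Proof.
exists 64, 256; split => // n h.
exists (Bset n); split; first exact: inSS_B.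
move=> m S gs; have [uU sU Uc Up] := U_props h.
apply: final_arith => //; rewrite -sU.
exact: lower_general (inSS_B h) gs uU Uc Up.
Qed.

Local Open Scope fset_scope.

Definition child (sig c : bitseq) : bitseq :=
  let ks := iota (size sig).+1 (size c - size sig) in
  take (nth 0 ks (find (fun k => palindrome (take k c)) ks)) c.

Lemma child_spec sig c : pprefix sig c -> palindrome c ->
  [/\ prefix (child sig c) c, palindrome (child sig c), (size sig < size (child sig c))%N &
      forall u, palindrome u -> prefix u c -> (size sig < size u)%N -> (size (child sig c) <= size u)%N].
Proof.
move=> pp pc; have lt := pprefix_size pp.
rewrite /child; set ks := iota _ _; set a := (fun k => _).
have hs : has a ks.
  apply/hasP; exists (size c); last by rewrite /a take_size.
  rewrite mem_iota; lia.
have fl : (find a ks < size c - size sig)%N by move: hs; rewrite has_find size_iota.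
have nk : nth 0 ks (find a ks) = ((size sig).+1 + find a ks)%N by rewrite nth_iota.
have szt : size (take (nth 0 ks (find a ks)) c) = nth 0 ks (find a ks).
  rewrite size_takel // nk; lia.
split.
- exact: prefix_take.
- exact: (nth_find 0 hs).
- rewrite szt nk; lia.
- move=> u pu uc su; rewrite szt; case: (leqP (nth 0 ks (find a ks)) (size u)) => // hl.
  have hi : (size u - (size sig).+1 < find a ks)%N by rewrite nk in hl; lia.
  have := before_find 0 hi; rewrite /a nth_iota; last by lia.
  have -> : ((size sig).+1 + (size u - (size sig).+1) = size u)%N by lia.
  by move: uc; rewrite prefixE => /eqP ->; rewrite pu.
Qed.

Lemma child_N n sig c : pprefix sig c -> palindrome c -> palindrome sig -> (size c <= n)%N ->
  inNn n sig (child sig c).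
Proof.
move=> pp pc ps szc; have [wc pw sw mn] := child_spec pp pc.
have sc : prefix sig (child sig c) by apply: prefix_comp (proj1 (andP pp)) wc (ltnW sw).
split; last by apply: leq_trans (size_prefix wc) szc.
split => //; first exact: prefix_pprefix.
move=> u pu /[dup] up /pprefix_size ltu.
case: (leqP (size u) (size sig)) => // h.
have := mn u pu (prefix_trans (proj1 (andP up)) wc) h; lia.
Qed.

Local Open Scope fset_scope.

Definition covers (C : {fset bitseq}) w := has (fun c => prefix w c) (enum_fset C).
Definition Ch (C : {fset bitseq}) sig : {fset bitseq} :=
  [fset child sig c | c in [seq c <- enum_fset C | pprefix sig c]].
Definition Cov (C S : {fset bitseq}) sig : {fset bitseq} :=
  [fset w in (S `\ sig) | covers C w] `|` Ch C sig.
Definition Dset (C S : {fset bitseq}) sig := (S `\ sig) `\` Cov C S sig.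
Definition Snew n C S sig := Cov C S sig `|` [fset x in take (n - #|` Cov C S sig|) (enum_fset (Dset C S sig))].

Lemma coversP C w : reflect (exists2 c, c \in C & prefix w c) (covers C w).
Proof. exact: hasP. Qed.

Lemma mem_Ch C sig w : w \in Ch C sig -> exists2 c, c \in C & pprefix sig c /\ w = child sig c.
Proof. by move=> /imfsetP[c /= /[!mem_filter] /andP[pc cC] ->]; exists c. Qed.

Lemma in_Ch C sig c : c \in C -> pprefix sig c -> child sig c \in Ch C sig.
Proof. move=> cC pc; apply/imfsetP; exists c => //=; by rewrite mem_filter pc. Qed.

Lemma mem_Cov C S sig w : w \in Cov C S sig = ((w \in S `\ sig) && covers C w) || (w \in Ch C sig).
Proof. by rewrite in_fsetU in_fset. Qed.

Lemma mem_Snew n C S sig w : w \in Snew n C S sig -> (w \in S /\ w != sig) \/ w \in Ch C sig.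
Proof.
rewrite in_fsetU mem_Cov => /orP[/orP[/andP[]|]|].
- by rewrite in_fsetD1 => /andP[a b] _; left.
- by right.
- rewrite in_fset => /mem_take; rewrite in_fsetD in_fsetD1 => /and3P[_ a b]; by left.
Qed.

Lemma antichain_card (C X : {fset bitseq}) :
  (forall u v, u \in X -> v \in X -> ~~ pprefix u v) ->
  (forall w, w \in X -> covers C w) -> (#|` X| <= #|` C|)%N.
Proof.
move=> ac cv.
pose g w := nth [::] (enum_fset C) (find (prefix w) (enum_fset C)).
have gP : forall w, w \in X -> g w \in C /\ prefix w (g w).
  move=> w wX; have hs := cv w wX; split; first by apply: mem_nth; rewrite -has_find.
  exact: (nth_find [::] hs).
have inj : {in X &, injective g}.
  move=> u v uX vX E; have [_ pu] := gP u uX; have [_ pv] := gP v vX.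
  rewrite -E in pv.
  case: (leqP (size u) (size v)) => h.
    have puv := prefix_comp pu pv h.
    case: (eqVneq u v) => // ne; have := ac u v uX vX; by rewrite /pprefix puv ne.
  have pvu := prefix_comp pv pu (ltnW h).
  case: (eqVneq v u) => // ne; have := ac v u vX uX; by rewrite /pprefix pvu ne.
have /eqP <- : #|` g @` X| == #|` X| by apply/card_in_imfsetP.
apply: fsubset_leq_card; apply/fsubsetP => x /imfsetP[w /= wX ->]; by have [] := gP w wX.
Qed.

Lemma arith1 a b n : (b <= a - 1 -> a <= n -> 0 < a -> n - a <= n.-1 - b)%N.
Proof. lia. Qed.

Lemma one_step n C S sig c0 :
  inSS n C -> inSS n S -> (forall c, c \in C -> cov S c) ->
  sig \in S -> c0 \in C -> pprefix sig c0 ->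
  [/\ inSS n (Snew n C S sig), step n S (Snew n C S sig),
      (forall c, c \in C -> cov (Snew n C S sig) c),
      (forall p, cov (Snew n C S sig) p -> cov S p) &
      ~~ cov (Snew n C S sig) sig].
Proof.
move=> hC hS hcov sigS c0C pp0.
have [[Cpal Cac] Ccard C1 Csz] := hC.
have [[Spal Sac] Scard S1 Ssz] := hS.
have [sigpal signe] := Spal sig sigS.
have sig1 : (0 < size sig)%N by case: sig signe {sigS sigpal pp0}.
have chP : forall w, w \in Ch C sig -> [/\ inNn n sig w, (size sig < size w)%N, palindrome w,
    (size w <= n)%N & exists2 c, c \in C & [/\ pprefix sig c, prefix w c &
      forall u, palindrome u -> prefix u c -> (size sig < size u)%N -> (size w <= size u)%N]].
  move=> w /mem_Ch[c cC [pc ->]]; have [pcc _] := Cpal c cC.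
  have [wc pw sw mn] := child_spec pc pcc.
  split => //; first exact: child_N pc pcc sigpal (Csz c cC).
    exact: leq_trans (size_prefix wc) (Csz c cC).
  by exists c.
pose good u := (u \in S /\ u != sig) \/ u \in Ch C sig.
have AC : forall u v, good u -> good v -> ~~ pprefix u v.
  move=> u v [[uS une]|uCh] [[vS vne]|vCh].
  - exact: Sac.
  - apply/negP => /andP[puv _]; have [[[_ _ /andP[sv _] _] _] szv _ _ _] := chP v vCh.
    case: (leqP (size u) (size sig)) => h.
      have := Sac u sig uS sigS; by rewrite /pprefix (prefix_comp puv sv h) une.
    have := Sac sig u sigS uS; rewrite /pprefix (prefix_comp sv puv (ltnW h)) eq_sym une //.
  - apply/negP => /andP[puv _]; have [[[_ _ /andP[su _] _] _] _ _ _ _] := chP u uCh.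
    have := Sac sig v sigS vS; by rewrite /pprefix (prefix_trans su puv) eq_sym vne.
  - apply/negP => pp; have [_ szu pu _ _] := chP u uCh.
    have [_ _ _ _ [c' c'C [_ vc' mn]]] := chP v vCh.
    have := mn u pu (prefix_trans (proj1 (andP pp)) vc') szu.
    by move=> h; have := pprefix_size pp; rewrite ltnNge h.
have goodSnew : forall w, w \in Snew n C S sig -> good w.
  move=> w /mem_Snew; by [].
have goodCov : forall w, w \in Cov C S sig -> good w.
  move=> w; rewrite mem_Cov => /orP[/andP[]|]; last by right.
  by rewrite in_fsetD1 => /andP[a b] _; left.
have hCov : (#|` Cov C S sig| <= n)%N.
  rewrite -Ccard; apply: antichain_card => [u v uC vC|w]; first exact: AC (goodCov u uC) (goodCov v vC).
  rewrite mem_Cov => /orP[/andP[_ //]|/chP[_ _ _ _ [c cC [_ wc _]]]].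
  by apply/coversP; exists c.
set ch0 := child sig c0.
have ch0Ch : ch0 \in Ch C sig by apply: in_Ch.
have ch0Cov : ch0 \in Cov C S sig by rewrite mem_Cov ch0Ch orbT.
have ch0S : ch0 \notin S.
  apply/negP => ch0S; have [[[_ _ pps _] _] _ _ _ _] := chP ch0 ch0Ch.
  by have := Sac sig ch0 sigS ch0S; rewrite pps.
have cA : #|` S `\ sig| = n.-1.
  have e := cardfsD1 sig S; rewrite sigS Scard add1n in e; by rewrite e.
have cI : (#|` (S `\ sig) `&` Cov C S sig| <= #|` Cov C S sig| - 1)%N.
  have := cardfsD1 ch0 (Cov C S sig); rewrite ch0Cov add1n => ->.
  rewrite subn1 /=.
  apply: fsubset_leq_card; apply/fsubsetP => x; rewrite in_fsetI in_fsetD1 => /andP[/andP[_ xS] xC].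
  rewrite in_fsetD1 xC andbT; apply/eqP => E; by rewrite -E xS in ch0S.
have cD : (n - #|` Cov C S sig| <= #|` Dset C S sig|)%N.
  rewrite /Dset cardfsD cA.
  have : (0 < #|` Cov C S sig|)%N by rewrite cardfs_gt0; apply/fset0Pn; exists ch0.
  move=> h0; exact: arith1 cI hCov h0.
have cardS' : #|` Snew n C S sig| = n.
  rewrite /Snew cardfsU card_fseq undup_id; last exact/take_uniq/fset_uniq.
  rewrite size_takel //.
  have -> : Cov C S sig `&` [fset x in take (n - #|` Cov C S sig|) (enum_fset (Dset C S sig))] = fset0.
    apply/fsetP => x; rewrite in_fsetI in_fset0; apply/negP => /andP[xC]; rewrite in_fset => /mem_take.
    by rewrite in_fsetD xC.
  by rewrite cardfs0 subn0 subnKC.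
have szS' : forall w, w \in Snew n C S sig -> [/\ palindrome w, w != [::], w != [:: true] & (size w <= n)%N].
  move=> w /goodSnew [[wS _]|wCh].
    by have [pw nw] := Spal w wS; split => //; [apply/negP => /eqP E; rewrite -E wS in S1 | exact: Ssz].
  have [_ sz pw szn _] := chP w wCh.
  split => //; apply/eqP => E; by move: sz sig1; rewrite E; case: (size sig).
split.
- split => //.
  + split; first by move=> w /szS'[]. 
    by move=> u v /goodSnew gu /goodSnew gv; exact: AC.
  + by apply/negP => /szS'[].
  + by move=> w /szS'[].
- exists sig => // w /goodSnew [[wS wne]|wCh]; first by split => //; left.
  have [hN sz _ _ _] := chP w wCh; split; first by right.
  by apply/eqP => E; move: sz; rewrite E ltnn.
- move=> c cC; have /covP[s sS sc] := hcov c cC.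
  case: (eqVneq s sig) => [E|ne].
    subst s.
    have scne : sig != c.
      apply/eqP => E; subst c; by have := Cac sig c0 cC c0C; rewrite pp0.
    have pc : pprefix sig c by rewrite /pprefix sc scne.
    apply/covP; exists (child sig c).
      by rewrite in_fsetU mem_Cov (in_Ch cC pc) !orbT.
    by have [] := child_spec pc (proj1 (Cpal c cC)).
  apply/covP; exists s => //; rewrite in_fsetU mem_Cov in_fsetD1 ne sS /=.
  by apply/orP; left; apply/orP; left; apply/coversP; exists c.
- move=> p /covP[s' s'S sp]; apply/covP; case: (goodSnew s' s'S) => [[a _]|wCh].
    by exists s'.
  have [[[_ _ /andP[ss _] _] _] _ _ _ _] := chP s' wCh.
  exists sig => //; exact: prefix_trans ss sp.
- apply/negP => /covP[s' s'S sp]; case: (goodSnew s' s'S) => [[a ne]|wCh].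
    have h := size_prefix sp.
    case: (eqVneq (size s') (size sig)) => [E|E].
      by move: ne; rewrite (prefix_same_size sp E) eqxx.
    have := Sac s' sig a sigS; by rewrite /pprefix sp ne.
  have [_ sz _ _ _] := chP s' wCh; by have := leq_trans sz (size_prefix sp); rewrite ltnn.
Qed.

Local Close Scope fset_scope.

Definition Phi (C S : {fset bitseq}) : nat :=
  \sum_(c <- enum_fset C) count (fun k => palindrome (take k c) && cov S (take k c)) (iota 0 (size c)).

Lemma count_lt (T : eqType) (a' a : pred T) (s : seq T) x :
  (forall y, a' y -> a y) -> x \in s -> a x -> ~~ a' x -> count a' s < count a s.
Proof.
move=> sub; elim: s => //= y s IH; rewrite in_cons => /orP[/eqP <-|xs] ax nax.
  by rewrite ax (negbTE nax) add0n add1n ltnS; apply: sub_count.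
apply: leq_ltn_trans (_ : a' y + count a' s <= a y + count a' s) _.
  by rewrite leq_add2r; case: (a' y) (sub y) => // ->.
by rewrite ltn_add2l IH.
Qed.

Lemma Phi_lt (C S S' : {fset bitseq}) sig c0 : (forall p, cov S' p -> cov S p) -> ~~ cov S' sig ->
  sig \in S -> palindrome sig -> c0 \in C -> pprefix sig c0 -> Phi C S' < Phi C S.
Proof.
move=> mono nc sigS ps c0C pp.
have c0e : c0 \in enum_fset C by [].
rewrite /Phi (big_rem c0 c0e) [X in _ < X](big_rem c0 c0e) /=.
rewrite -addSn; apply: leq_add.
  apply: (@count_lt _ _ _ _ (size sig)).
  - by move=> k /andP[-> /mono ->].
  - rewrite mem_iota add0n; exact: pprefix_size.
  - have -> : take (size sig) c0 = sig by apply/eqP; rewrite -prefixE; case/andP: pp.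
    by rewrite ps /=; apply/covP; exists sig => //; exact: prefix_refl.
  - have -> : take (size sig) c0 = sig by apply/eqP; rewrite -prefixE; case/andP: pp.
    by rewrite (negbTE nc) andbF.
apply: leq_sum. move=> c _. apply: sub_count. move=> k /andP[pk /mono ck]. by rewrite pk ck.
Qed.

Lemma Phi_R n C : inSS n C -> Phi C (R_code n) <= sum_len_minus1 C.
Proof.
move=> [[Cpal _] _ _ _]; rewrite /Phi /sum_len_minus1.
rewrite big_seq [X in _ <= X]big_seq; apply: leq_sum => c cC.
have [_ cne] := Cpal c cC.
case E: (size c) => [|l]; first by move: cne; rewrite -size_eq0 E.
rewrite /= subn1 /=.
have -> : cov (R_code n) (take 0 c) = false.
  apply/negP => /covP[r /R_memP[i /[!mem_iota] /andP[i1 _] ->]]; rewrite take0 prefixs0 => /eqP E'.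
  have := s_word_size i1; rewrite E' /= => ei; by move: i1; rewrite -ei.
rewrite andbF add0n; apply: leq_trans (count_size _ _) _; by rewrite size_iota.
Qed.

Local Open Scope fset_scope.

Lemma aux n (C : {fset bitseq}) k : inSS n C -> forall S, (Phi C S < k)%N -> inSS n S ->
  (forall c, c \in C -> cov S c) ->
  exists m (T : nat -> {fset bitseq}), [/\ (m <= Phi C S)%N, T 0 = S /\ T m = C,
    (forall i, (0 < i <= m)%N -> inSS n (T i)),
    (forall i, (i < m)%N -> step n (T i) (T i.+1)) &
    (forall i, (i < m)%N -> forall c, c \in C -> exists2 p, p \in T i & prefix p c)].
Proof.
move=> hC; elim: k => [//|k IH] S hk hS hcov.
case: (boolP (has (fun s => has (fun c => pprefix s c) (enum_fset C)) (enum_fset S))) => [/hasP[sig sigS /hasP[c0 c0C pp]]|hn].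
  have [hS' hst hcov' mono nc] := one_step hC hS hcov sigS c0C pp.
  have [[Spal _] _ _ _] := hS; have [ps _] := Spal sig sigS.
  have lt := Phi_lt mono nc sigS ps c0C pp.
  have [m [T [hm [T0 Tm] hin hstp hpre]]] := IH _ (leq_trans lt (ltnSE hk)) hS' hcov'.
  exists m.+1, (fun i => if i is i'.+1 then T i' else S); split => //.
  - exact: leq_ltn_trans hm lt.
  - case=> [//|i] /andP[_ hi]; case: i hi => [|i] hi; first by rewrite T0.
    by apply: hin.
  - case=> [|i] hi; first by rewrite T0.
    exact: hstp.
  - case=> [|i] hi c cC; first by apply/covP; exact: hcov.
    exact: hpre.
exists 0, (fun _ => S); split => //; split => //.
have sub : C `<=` S.
  apply/fsubsetP => c cC; have /covP[s sS sc] := hcov c cC.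
  case: (eqVneq s c) => [<-//|ne].
  by move/hasP: hn => []; exists s => //; apply/hasP; exists c => //; rewrite /pprefix sc ne.
have [_ Scard _ _] := hS; have [_ Ccard _ _] := hC.
apply/esym/eqP; by rewrite eqEfcard sub Scard Ccard leqnn.
Qed.

Lemma part1 (n : nat) (C : {fset bitseq}) : (1 <= n)%N -> inSS n C ->
     exists m (S : nat -> {fset bitseq}), (m <= sum_len_minus1 C)%N /\ good_seq n C m S.
Proof.
move=> n1 hC.
have hcov : forall c, c \in C -> cov (R_code n) c.
  move=> c cC; have [[Cpal _] _ C1 Csz] := hC; have [pc ne] := Cpal c cC.
  have nt : c != [:: true] by apply/eqP => E; rewrite -E cC in C1.
  have [r rR rc] := R_cover pc ne nt (Csz c cC); apply/covP; by exists r.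
have [m [T [hm [T0 Tm] hin hstp hpre]]] := aux (k := (Phi C (R_code n)).+1) hC (ltnSn _) (inSS_R n) hcov.
exists m, T; split; first exact: leq_trans hm (Phi_R hC).
by split.
Qed.

Local Open Scope fset_scope.

Theorem theorem2 :
  (forall (n : nat) (C : {fset bitseq}), 1 <= n -> inSS n C ->
     exists m (S : nat -> {fset bitseq}),
       m <= sum_len_minus1 C /\ good_seq n C m S) /\
  (* lower bound: m = Omega(n^{1.5}), i.e. n^3 <= c * m^2 for large n *)
  (exists c N0 : nat, 0 < c /\
     forall n, N0 <= n ->
       exists B : {fset bitseq}, inSS n B /\
         forall m (S : nat -> {fset bitseq}), good_seq n B m S ->
           n ^ 3 <= c * m ^ 2).
Proof.
split; [exact: part1 | exact: part2].
Qed.
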